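(* A Level-SP PAF $\psi$ is certainty preserving if and only if $\psi$ is unanimous and $\psi$ admits a max-min representation whose phantom functions $f_S$, $S\subseteq N$, are all constant functions. Equivalently, a Level-SP PAF $\psi$ is certainty preserving iff there exist constants $\beta_S\in[0,1]$ ($S\subseteq N$), weakly increasing with respect to inclusion, with $\beta_\emptyset=0$, $\beta_N=1$, such that for all $\mathbf P\in\mathcal C^N$ and $a\in\Lambda$, $\Psi(\mathbf P)(a)=\max_{S\subseteq N}\min(\beta_S,\min_{i\in S}P_i(a))$.
   Context: Let $N=\{1,\dots,n\}$, $\Lambda\subseteq\mathbb R$ a nonempty Borel set, $\mathcal P$ the Borel probability measures on $\Lambda$, $\mathcal C$ the CDFs on $\Lambda$, $\pi(p)(a)=p(\{x\in\Lambda:x\le a\})$. A PAF is a map $\psi:\mathcal P^N\to\mathcal P$ with associated CAF $\Psi$ given by $\Psi(\pi(p_1),\dots,\pi(p_n))=\pi(\psi(p_1,\dots,p_n))$; $P_i=\pi(p_i)$. $\mathbf z_{-i}(z_i')$ is $\mathbf z$ with $i$-th coordinate replaced by $z_i'$. $\psi$ is Level-SP if for every $i$, $\mathbf P$, $P_i'$, $a$: $P_i(a)<\Psi(\mathbf P)(a)\Rightarrow\Psi(\mathbf P)(a)\le\Psi(\mathbf P_{-i}(P_i'))(a)$ and $P_i(a)>\Psi(\mathbf P)(a)\Rightarrow\Psi(\mathbf P)(a)\ge\Psi(\mathbf P_{-i}(P_i'))(a)$. $\psi$ is unanimous if $\psi(p,\dots,p)=p$. A max-min representation of $\psi$ with phantom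 functions $(f_S)_{S\subseteq N}$ consists of weakly increasing right-continuous $f_S:\Lambda\to[0,1]$ with $f_S\le f_{S'}$ whenever $S\subseteq S'$, such that $\Psi(\mathbf P)(a)=\max_{S\subseteq N}\min(f_S(a),\min_{i\in S}P_i(a))$ for all $\mathbf P,a$ (minimum over the empty set is $1$); every Level-SP PAF admits one. $\psi$ is certainty preserving if for every profile $\mathbf p$ and every Borel $A\subseteq\Lambda$: if $p_i(A)=1$ for all $i\in N$ then $\psi(\mathbf p)(A)=1$. *)

(* Defs.v *)
From HB Require Import structures.
From mathcomp Require Import all_boot all_order all_algebra.
From mathcomp Require Import all_classical all_reals all_analysis.
Set Implicit Arguments. Unset Strict Implicit. Unset Printing Implicit Defensive.
Import Order.TTheory GRing.Theory Num.Theory.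
Local Open Scope classical_set_scope.
Local Open Scope ring_scope.

(* Borel probability measures on the Borel set Lambda of R are encoded as
   Borel probability measures on R concentrated on Lambda (canonical
   bijection). *)
Definition prob_on (R : realType) (Lam : set R) (p : probability R R) : Prop :=
  p Lam = 1%E.

Definition profile_on (R : realType) (n : nat) (Lam : set R)
  (p : 'I_n -> probability R R) : Prop := forall i, prob_on Lam (p i).

Definition is_PAF (R : realType) (n : nat) (Lam : set R)
  (psi : ('I_n -> probability R R) -> probability R R) : Prop :=
  forall p, profile_on Lam p -> prob_on Lam (psi p).

Definition paf_cdf (R : realType) (Lam : set R) (p : probability R R) (a : R) : R :=
  fine (p (Lam `&` `]-oo, a])).

Definition repl (T : Type) (n : nat) (z : 'I_n -> T) (i : 'I_n) (z2 : T) :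
  'I_n -> T := fun j => if j == i then z2 else z j.

Definition level_SP (R : realType) (n : nat) (Lam : set R)
  (psi : ('I_n -> probability R R) -> probability R R) : Prop :=
  forall (i : 'I_n) (p : 'I_n -> probability R R) (p2 : probability R R) (a : R),
    profile_on Lam p -> prob_on Lam p2 -> Lam a ->
    (paf_cdf Lam (p i) a < paf_cdf Lam (psi p) a ->
       paf_cdf Lam (psi p) a <= paf_cdf Lam (psi (repl p i p2)) a) /\
    (paf_cdf Lam (p i) a > paf_cdf Lam (psi p) a ->
       paf_cdf Lam (psi p) a >= paf_cdf Lam (psi (repl p i p2)) a).

Definition unanimous (R : realType) (n : nat) (Lam : set R)
  (psi : ('I_n -> probability R R) -> probability R R) : Prop :=
  forall p : probability R R, prob_on Lam p ->
    forall A : set R, measurable A -> psi (fun _ => p) A = p A.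

Definition certainty_preserving (R : realType) (n : nat) (Lam : set R)
  (psi : ('I_n -> probability R R) -> probability R R) : Prop :=
  forall p : 'I_n -> probability R R, profile_on Lam p ->
    forall A : set R, measurable A -> A `<=` Lam ->
      (forall i, p i A = 1%E) -> psi p A = 1%E.

Definition maxmin (R : realType) (n : nat) (f : {set 'I_n} -> R -> R)
  (P : 'I_n -> R) (a : R) : R :=
  \big[Num.max/0]_(S : {set 'I_n})
     Num.min (f S a) (\big[Num.min/1]_(i in S) P i).

Definition phantom_fun (R : realType) (Lam : set R) (g : R -> R) : Prop :=
  (forall a, Lam a -> 0 <= g a <= 1) /\
  (forall a b, Lam a -> Lam b -> a <= b -> g a <= g b) /\
  (forall a, Lam a -> forall e : R, 0 < e -> exists2 d : R, 0 < d &
     forall b, Lam b -> a <= b -> b < a + d -> `|g b - g a| < e).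

Definition maxmin_representation (R : realType) (n : nat) (Lam : set R)
  (psi : ('I_n -> probability R R) -> probability R R)
  (f : {set 'I_n} -> R -> R) : Prop :=
  (forall S, phantom_fun Lam (f S)) /\
  (forall (S S2 : {set 'I_n}) a, Lam a -> S \subset S2 -> f S a <= f S2 a) /\
  (forall p, profile_on Lam p -> forall a, Lam a ->
     paf_cdf Lam (psi p) a = maxmin f (fun i => paf_cdf Lam (p i) a) a).

Definition constant_on (R : realType) (Lam : set R) (g : R -> R) : Prop :=
  forall a b, Lam a -> Lam b -> g a = g b.

(* Main.v *)
Require Import Defs.
From HB Require Import structures.
From mathcomp Require Import all_boot all_order all_algebra.
From mathcomp Require Import all_classical all_reals all_analysis.
Import Order.TTheory GRing.Theory Num.Theory.
Local Open Scope classical_set_scope.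
Local Open Scope ring_scope.

Section T.
Context (R : realType).
Definition mI (m : {measure set R -> \bar R}) : set (measurableTypeR R) -> \bar R := fun A => m A.
HB.instance Definition _ m := isMeasure.Build _ (measurableTypeR R) R (mI m)
  (measure0 m) (measure_ge0 m) (@measure_semi_sigma_additive _ _ _ m).
Definition mO (m : {measure set R -> \bar R}) : set (ocitv_type R) -> \bar R := fun A => m A.
Lemma mO_ssa m : semi_sigma_additive (mO m).
Proof.
move=> F mF tF mU. apply: (@measure_semi_sigma_additive _ _ _ m).
- by move=> i; apply: sub_sigma_algebra; exact: mF.
- exact: tF.
- by apply: sub_sigma_algebra.
Qed.
HB.instance Definition _ m := isMeasure.Build _ (ocitv_type R) R (mO m)
  (measure0 m) (fun A => measure_ge0 m A) (mO_ssa m).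

Lemma domR (m1 m2 : {measure set R -> \bar R}) : (m2 setT < +oo)%E ->
  (forall x y : R, (m1 `]x, y]%classic <= m2 `]x, y]%classic)%E) ->
  forall A, measurable A -> (m1 A <= m2 A)%E.
Proof.
move=> m2oo H A mA.
have sf : sigma_finite [set: ocitv_type R] (mO m2).
  exists (fun k : nat => `] (- k%:R)%R, k%:R]%classic); first by rewrite bigcup_itvT.
  move=> k; split; first exact: is_ocitv.
  rewrite /mO; apply: le_lt_trans m2oo; apply: (le_measure m2); rewrite ?inE//.
have E := @measure_extension_unique _ _ _ (mO m2) sf (mI m2) (fun X mX => erefl) A mA.
change (m1 A <= mI m2 A)%E; rewrite -E /measure_extension.
apply/le_ereal_inf_tmp => x [B [mB AB] <-{x}].
have mB' : forall k, measurable (B k : set R).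
  by move=> k; apply: sub_sigma_algebra; exact: mB.
apply: (@le_trans _ _ (m1 (\bigcup_k B k))).
  by apply: le_measure; rewrite ?inE//; exact: bigcupT_measurable.
apply: le_trans; first exact: (generalized_Boole_inequality m1 mB' (bigcupT_measurable _ mB')).
apply: lee_nneseries => [k _ _|k _]; first exact: measure_ge0.
by have [[x y] _ <-] := mB k; exact: H.
Qed.
End T.

Lemma ext_seq (R : realType) (Lam : set R) (c : R) :
  (Lam `&` `]-oo, c]) !=set0 ->
  exists b : nat -> R, (forall k, Lam (b k) /\ b k <= c) /\
    {homo b : i j / (i <= j)%N >-> i <= j} /\
    Lam `&` `]-oo, c] = \bigcup_k (Lam `&` `]-oo, b k]).
Proof.
set E := Lam `&` `]-oo, c] => E0.
have ubE : ubound E c by move=> z [_]; rewrite /= in_itv /=.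
have hsE : has_sup E by split => //; exists c.
set s := sup E.
have Es_le z : E z -> z <= s by move=> Ez; exact: sup_upper_bound.
have sc : s <= c by apply: ge_sup.
have [Es|nEs] := pselect (E s).
  exists (fun _ => s); split; first by move=> _; case: Es.
  split; first by move=> *.
  apply/seteqP; split=> z.
    by move=> Ez; exists 0%N => //; split; [case: Ez|rewrite /= in_itv /= Es_le].
  by move=> [_ _ [Lz]]; rewrite /= in_itv /= => zs; split => //; rewrite /= in_itv /= (le_trans zs).
have hb' k : exists2 y, E y & s - (k.+1%:R)^-1 < y.
  apply: sup_gt => //; rewrite ltrBlDr ltrDl invr_gt0 ltr0n //.
pose b' k := projT1 (cid2 (hb' k)).
have Eb' k : E (b' k) by rewrite /b'; case: cid2.
have b'gt k : s - (k.+1%:R)^-1 < b' k by rewrite /b'; case: cid2.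
pose b := fix f k := if k is k'.+1 then Num.max (f k') (b' k) else b' 0%N.
have Eb k : E (b k).
  elim: k => [|k IH] //=.
  by rewrite /Num.max; case: ifP.
have bge k : b' k <= b k.
  by case: k => [|k] //=; rewrite le_max lexx orbT.
exists b; split; first by move=> k; have [? ] := Eb k; rewrite /= in_itv.
split.
  by apply/nondecreasing_seqP => k /=; rewrite le_max lexx.
apply/seteqP; split=> z.
  move=> Ez; have zs : z < s.
    by rewrite lt_neqAle Es_le // andbT; apply/negP => /eqP zs; apply: nEs; rewrite -zs.
  have sz0 : 0 < s - z by rewrite subr_gt0.
  pose k := Num.truncn ((s - z)^-1).
  have hk : (k.+1%:R)^-1 < s - z.
    rewrite -[X in _ < X]invrK ltf_pV2 ?posrE ?invr_gt0 ?ltr0n//.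
    exact: truncnS_gt.
  exists k => //; split; first by case: Ez.
  rewrite /= in_itv /=; apply: (le_trans _ (bge k)); apply/ltW.
  by apply: lt_trans (b'gt k); rewrite ltrBrDl addrC -ltrBrDl.
move=> [k _ [Lz]]; rewrite /= in_itv /= => zb; split => //.
by rewrite /= in_itv /= (le_trans zb)//; have [_] := Eb k; rewrite /= in_itv.
Qed.

Lemma lim_up (R : realType) (m1 m2 : {measure set R -> \bar R}) (F : (set R)^nat) :
  (forall k, measurable (F k)) -> nondecreasing_seq F ->
  (forall k, (m1 (F k) <= m2 (F k))%E) -> (m1 (\bigcup_k F k) <= m2 (\bigcup_k F k))%E.
Proof.
move=> mF ndF H.
have c1 := @nondecreasing_cvg_mu _ _ _ m1 F mF (bigcupT_measurable F mF) ndF.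
have c2 := @nondecreasing_cvg_mu _ _ _ m2 F mF (bigcupT_measurable F mF) ndF.
rewrite -(cvg_lim _ c1)// -(cvg_lim _ c2)//.
apply: lee_lim; [exact: cvgP c1|exact: cvgP c2|exact: nearW].
Qed.

Lemma lim_down (R : realType) (m1 m2 : {measure set R -> \bar R}) (F : (set R)^nat) :
  (forall k, measurable (F k)) -> nonincreasing_seq F ->
  (m1 (F 0%N) < +oo)%E -> (m2 (F 0%N) < +oo)%E ->
  (forall k, (m1 (F k) <= m2 (F k))%E) -> (m1 (\bigcap_k F k) <= m2 (\bigcap_k F k))%E.
Proof.
move=> mF niF f1 f2 H.
have c1 := nonincreasing_cvg_mu f1 mF (bigcapT_measurable mF) niF.
have c2 := nonincreasing_cvg_mu f2 mF (bigcapT_measurable mF) niF.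
rewrite -(cvg_lim _ c1)// -(cvg_lim _ c2)//.
apply: lee_lim; [exact: cvgP c1|exact: cvgP c2|exact: nearW].
Qed.

Lemma domLam (R : realType) (Lam : set R) (mL : measurable Lam)
  (m1 m2 : {measure set R -> \bar R}) :
  (m1 setT < +oo)%E -> (m2 setT < +oo)%E -> m1 (~` Lam) = 0%E ->
  (forall a, Lam a -> (m1 (Lam `&` `]-oo, a]) <= m2 (Lam `&` `]-oo, a]))%E) ->
  (forall a b, Lam a -> Lam b -> a <= b ->
     (m1 (Lam `&` `]a, b]) <= m2 (Lam `&` `]a, b]))%E) ->
  forall x y : R, (m1 `]x, y]%classic <= m2 `]x, y]%classic)%E.
Proof.
move=> f1 f2 m1L H1 H2.
have mI (a b : itv_bound R) : measurable (Lam `&` [set` Interval a b]).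
  exact: measurableI.
have fin (m : {measure set R -> \bar R}) A : measurable A -> (m setT < +oo)%E -> (m A < +oo)%E.
  by move=> mA mT; apply: le_lt_trans mT; apply: le_measure; rewrite ?inE.
have SA' (y : R) : (m1 (Lam `&` `]-oo, y]) <= m2 (Lam `&` `]-oo, y]))%E.
  have [E0|/set0P E0] := eqVneq (Lam `&` `]-oo, y]) set0.
    by rewrite E0 !measure0.
  have [b [Lb [ndb ->]]] := @ext_seq _ _ _ E0.
  apply: lim_up => //.
  - move=> i j ij; apply/subsetPset => z [Lz]; rewrite /= ?in_itv /= => zb.
    by split => //; apply: (le_trans zb); exact: ndb.
  - by move=> k; apply: H1; case: (Lb k).
have SA (a y : R) : Lam a ->
    (m1 (Lam `&` `]a, y]) <= m2 (Lam `&` `]a, y]))%E.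
  move=> La.
  have [ya|ay] := ltP y a.
    have -> : Lam `&` `]a, y] = set0.
      apply/seteqP; split => z // [_]; rewrite /= ?in_itv /= => /andP[az zy].
      by have := lt_trans (le_lt_trans zy ya) az; rewrite ltxx.
    by rewrite !measure0.
  have [E0|/set0P E0] := eqVneq (Lam `&` `]-oo, y]) set0.
    have -> : Lam `&` `]a, y] = set0.
      apply/seteqP; split => // z [Lz]; rewrite /= ?in_itv /= => /andP[_ zy].
      have : (Lam `&` `]-oo, y]) z by split => //; rewrite /= ?in_itv.
      by rewrite E0.
    by rewrite !measure0.
  have [b [Lb [ndb Eb]]] := @ext_seq _ _ _ E0.
  have -> : Lam `&` `]a, y] = \bigcup_k (Lam `&` `]a, Num.max a (b k)]).
    apply/seteqP; split => z.
      move=> [Lz]; rewrite /= ?in_itv /= => /andP[az zy].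
      have : (Lam `&` `]-oo, y]) z by split => //; rewrite /= ?in_itv.
      rewrite Eb => -[k _ [_]]; rewrite /= ?in_itv /= => zb.
      by exists k => //; split => //; rewrite /= ?in_itv /= az le_max zb orbT.
    move=> [k _ [Lz]]; rewrite /= ?in_itv /= => /andP[az zm]; split => //.
    rewrite /= ?in_itv /= az (le_trans zm) //= ge_max ay.
    by case: (Lb k).
  apply: lim_up => //.
  - move=> i j ij; apply/subsetPset => z [Lz]; rewrite /= ?in_itv /= => /andP[az zb].
    split => //; rewrite /= ?in_itv /= az (le_trans zb) //.
    by rewrite ge_max !le_max lexx /= (ndb _ _ ij) orbT.
  - move=> k; apply: H2 => //; last by rewrite le_max lexx.
    by rewrite /Num.max; case: ifP => _ //; case: (Lb k).
have SB (x y : R) : (m1 (Lam `&` `]x, y]) <= m2 (Lam `&` `]x, y]))%E.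
  have [E0|/set0P E0] := eqVneq (Lam `&` `]-oo, x]) set0.
    have -> : Lam `&` `]x, y] = Lam `&` `]-oo, y].
      apply/seteqP; split => z [Lz]; rewrite /= ?in_itv /=.
        by move=> /andP[_ ->].
      move=> zy; split => //; rewrite /= ?in_itv /= zy andbT ltNge.
      apply/negP => zx; have : (Lam `&` `]-oo, x]) z by split => //; rewrite /= ?in_itv.
      by rewrite E0.
    exact: SA'.
  have [a [La [nda Ea]]] := @ext_seq _ _ _ E0.
  have -> : Lam `&` `]x, y] = \bigcap_k (Lam `&` `]a k, y]).
    apply/seteqP; split => z.
      move=> [Lz]; rewrite /= ?in_itv /= => /andP[xz zy] k _; split => //.
      rewrite /= ?in_itv /= zy andbT; apply: le_lt_trans xz; by case: (La k).
    move=> Hz; have [Lz _] := Hz 0%N I; split => //.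
    have zy : z <= y by have [_] := Hz 0%N I; rewrite /= ?in_itv /= => /andP[].
    rewrite /= ?in_itv /= zy andbT ltNge; apply/negP => zx.
    have : (Lam `&` `]-oo, x]) z by split => //; rewrite /= ?in_itv.
    rewrite Ea => -[k _ [_]]; rewrite /= ?in_itv /= => zak.
    by have [_] := Hz k I; rewrite /= ?in_itv /= ltNge zak.
  apply: lim_down => //.
  - move=> i j ij; apply/subsetPset => z [Lz]; rewrite /= ?in_itv /= => /andP[az zy].
    by split => //; rewrite /= ?in_itv /= zy andbT; apply: le_lt_trans az; exact: nda.
  - exact: fin.
  - exact: fin.
  - by move=> k; apply: SA; case: (La k).
move=> x y.
apply: (@le_trans _ _ (m1 ((Lam `&` `]x, y]) `|` ~` Lam))).
  apply: (le_measure m1); rewrite ?inE //=; try (by apply: measurableU; [exact: mI|exact: measurableC]).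
  by move=> z yz; case: (pselect (Lam z)) => Lz; [left|right].
apply: (@le_trans _ _ (m1 (Lam `&` `]x, y]) + m1 (~` Lam))%E).
  exact: measureU2 (mI _ _) (measurableC mL).
rewrite m1L adde0; apply: le_trans (SB x y) _.
by apply: le_measure; rewrite ?inE // => z [].
Qed.

Definition phi (R : realType) (n : nat) (beta : {set 'I_n} -> R) (t : 'I_n -> R) : R :=
  \big[Num.max/0]_(S : {set 'I_n}) Num.min (beta S) (\big[Num.min/1]_(i in S) t i).
Arguments phi {R n}.

Section phi_lemmas.
Context {R : realType} {n : nat}.
Implicit Types (beta : {set 'I_n} -> R) (t s : 'I_n -> R).

Lemma bmax_ge0 (F : {set 'I_n} -> R) : 0 <= \big[Num.max/0]_(S : {set 'I_n}) F S.
Proof. by apply: (big_rec (fun x => 0 <= x)) => // i x _ x0; rewrite le_max x0 orbT. Qed.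

Lemma bmax_le (F : {set 'I_n} -> R) c : 0 <= c -> (forall S, F S <= c) ->
  \big[Num.max/0]_(S : {set 'I_n}) F S <= c.
Proof. by move=> c0 H; apply: (big_rec (fun x => x <= c)) => // i x _ xc; rewrite ge_max H xc. Qed.

Lemma le_bmax (F : {set 'I_n} -> R) S0 : F S0 <= \big[Num.max/0]_(S : {set 'I_n}) F S.
Proof. by rewrite (bigD1 S0) //= le_max lexx. Qed.

Lemma bmin_le1 (S : {set 'I_n}) t : \big[Num.min/1]_(i in S) t i <= 1.
Proof. by apply: (big_rec (fun x => x <= 1)) => // i x _ x1; rewrite ge_min x1 orbT. Qed.

Lemma bmin_ge (S : {set 'I_n}) t c : c <= 1 -> (forall i, i \in S -> c <= t i) ->
  c <= \big[Num.min/1]_(i in S) t i.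
Proof. by move=> c1 H; apply: (big_rec (fun x => c <= x)) => // i x iS cx; rewrite le_min H. Qed.

Lemma bmin_le (S : {set 'I_n}) t i : i \in S -> \big[Num.min/1]_(j in S) t j <= t i.
Proof. by move=> iS; rewrite (bigD1 i) //= ge_min lexx. Qed.

Lemma bmin_shift (S : {set 'I_n}) t d : 0 <= d ->
  \big[Num.min/1]_(i in S) (t i + d) <= \big[Num.min/1]_(i in S) t i + d.
Proof.
move=> d0; apply: (big_rec2 (fun x y => y <= x + d)); first by rewrite lerDl.
move=> i x y _ yx.
have [tx|xt] := leP (t i) x.
  by rewrite ge_min lexx.
by rewrite ge_min yx orbT.
Qed.

Lemma phi_ge0 beta t : 0 <= phi beta t.
Proof. exact: bmax_ge0. Qed.

Lemma phi_mono beta t s : (forall i, t i <= s i) -> phi beta t <= phi beta s.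
Proof.
move=> ts; apply: bmax_le; first exact: phi_ge0.
move=> S; apply: le_trans (le_bmax _ S); rewrite le_min !ge_min lexx /=.
apply/orP; right; apply: bmin_ge; first exact: bmin_le1.
by move=> i iS; apply: le_trans (ts i); exact: bmin_le.
Qed.

Lemma phi_shift beta t d : 0 <= d -> phi beta (fun i => t i + d) <= phi beta t + d.
Proof.
move=> d0; apply: bmax_le; first by rewrite addr_ge0 // phi_ge0.
move=> S; apply: le_trans (_ : Num.min (beta S) (\big[Num.min/1]_(i in S) t i) + d <= _).
  have := bmin_shift S t d d0.
  set M' := \big[Num.min/1]_(i in S) _; set M := \big[Num.min/1]_(i in S) _ => HM.
  have [bM|Mb] := leP (beta S) M.
    by rewrite ge_min lerDl d0.
  by rewrite ge_min HM orbT.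
by rewrite lerD2r le_bmax.
Qed.

Lemma phi0_le beta : beta finset.set0 = 0 -> phi beta (fun _ => 0) <= 0.
Proof.
move=> b0; apply: bmax_le => // S.
have [->|[i iS]] := set_0Vmem S.
  by rewrite big_set0 b0 ge_min lexx.
by rewrite ge_min (bmin_le _ _ _ iS) orbT.
Qed.

Lemma phi_le_sum beta t : beta finset.set0 = 0 -> (forall i, 0 <= t i) ->
  phi beta t <= \sum_i t i.
Proof.
move=> b0 t0; set D := \sum_i t i.
have D0 : 0 <= D by apply: sumr_ge0.
apply: le_trans (_ : phi beta (fun i => 0 + D) <= _).
  apply: phi_mono => i; rewrite add0r /D (bigD1 i) //= lerDl.
  by apply: sumr_ge0.
apply: le_trans (phi_shift beta (fun _ => 0) D D0) _.
by rewrite -[X in _ <= X]add0r lerD2r phi0_le.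
Qed.

Lemma phi_diag beta c : beta finset.set0 = 0 -> beta finset.setT = 1 -> 0 <= c <= 1 ->
  phi beta (fun _ => c) = c.
Proof.
move=> b0 b1 /andP[c0 c1]; apply/eqP; rewrite eq_le; apply/andP; split.
  apply: bmax_le => // S.
  have [->|[i iS]] := set_0Vmem S.
    by rewrite big_set0 b0 ge_min c0.
  by rewrite ge_min (bmin_le _ _ _ iS) orbT.
apply: le_trans (le_bmax _ finset.setT); rewrite b1 le_min c1 /=.
exact: bmin_ge.
Qed.

Lemma phi_one beta : beta finset.setT = 1 -> (forall S, beta S <= 1) ->
  phi beta (fun _ => 1) = 1.
Proof.
move=> b1 bl; apply/eqP; rewrite eq_le; apply/andP; split.
  by apply: bmax_le => // S; rewrite ge_min bl.
apply: le_trans (le_bmax _ finset.setT); rewrite b1 le_min lexx /=.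
exact: bmin_ge.
Qed.

Lemma phi_set0_le beta t : Num.min (beta finset.set0) 1 <= phi beta t.
Proof. by have := le_bmax (fun S => Num.min (beta S) (\big[Num.min/1]_(i in S) t i)) finset.set0; rewrite big_set0. Qed.

Lemma phi_lip beta t s : (forall i, t i <= s i) ->
  phi beta s - phi beta t <= \sum_i s i - \sum_i t i.
Proof.
move=> ts; rewrite -sumrB; set D := \sum_i (s i - t i).
have D0 : 0 <= D by apply: sumr_ge0 => i _; rewrite subr_ge0.
rewrite lerBlDr addrC; apply: le_trans (phi_shift beta t D D0).
apply: phi_mono => i; rewrite -lerBlDl /D (bigD1 i) //= lerDl.
by apply: sumr_ge0 => j _; rewrite subr_ge0.
Qed.

End phi_lemmas.

Lemma cdf01 (R : realType) (Lam : set R) (p : probability R R) a :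
  measurable Lam -> 0 <= paf_cdf Lam p a <= 1.
Proof.
move=> mL; rewrite /paf_cdf.
have mX : measurable (Lam `&` `]-oo, a]) by exact: measurableI.
have h1 := probability_le1 p mX.
have h0 : (0 <= p (Lam `&` `]-oo, a]))%E := measure_ge0 _ _.
have : p (Lam `&` `]-oo, a]) \is a fin_num by rewrite fin_num_measure.
move=> /fineK E; move: h0 h1; rewrite -E !lee_fin => -> ->.
done.
Qed.

Arguments cdf01 {R Lam} p a.

Lemma cdf_dirac (R : realType) (Lam : set R) (x a : R) :
  Lam x -> paf_cdf Lam (\d_x : probability R R) a = if x <= a then 1 else 0.
Proof.
move=> Lx; rewrite /paf_cdf -[X in fine X]/(\d_x (Lam `&` `]-oo, a]) : \bar R) diracE.
case: ifP => xa.
  by rewrite mem_set //=; split => //; rewrite /= in_itv /= xa.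
rewrite memNset //= => -[_]; rewrite /= in_itv /= xa.
done.
Qed.

Lemma repl_id (T : Type) n (p : 'I_n -> T) i q : repl (repl p i q) i (p i) = p.
Proof. by apply: funext => j; rewrite /repl; case: eqVneq => // ->. Qed.

Lemma repl_profile (R : realType) n (Lam : set R) (p : 'I_n -> probability R R) i q :
  profile_on Lam p -> prob_on Lam q -> profile_on Lam (repl p i q).
Proof. by move=> Hp Hq j; rewrite /repl; case: eqVneq. Qed.
Arguments repl_profile {R n Lam p} i {q}.

Section level.
Context {R : realType} {n : nat} (Lam : set R)
  (psi : ('I_n -> probability R R) -> probability R R).
Hypothesis LSP : level_SP Lam psi.
Local Notation F p a := (paf_cdf Lam (psi p) a).
Local Notation Pc q a := (paf_cdf Lam q a).

Lemma mono_step p i q a : profile_on Lam p -> prob_on Lam q -> Lam a ->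
  Pc (p i) a <= Pc q a -> F p a <= F (repl p i q) a.
Proof.
move=> Hp Hq La le; rewrite leNgt; apply/negP => lt.
have [lt2|ge2] := ltP (Pc (p i) a) (F p a).
  by have := (LSP i p q a Hp Hq La).1 lt2; rewrite leNgt lt.
have Hp' := repl_profile i Hp Hq.
have Hpi : prob_on Lam (p i) := Hp i.
have gt : F (repl p i q) a < Pc (repl p i q i) a.
  by rewrite /repl eqxx; apply: lt_le_trans lt _; apply: le_trans ge2 le.
have := (LSP i (repl p i q) (p i) a Hp' Hpi La).2 gt; rewrite repl_id leNgt lt //.
Qed.

Lemma const_step_gt p i q a : profile_on Lam p -> prob_on Lam q -> Lam a ->
  F p a < Pc (p i) a -> F p a < Pc q a -> F (repl p i q) a = F p a.
Proof.
move=> Hp Hq La h1 h2.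
have le1 := (LSP i p q a Hp Hq La).2 h1.
apply/eqP; rewrite eq_le le1 /=; rewrite leNgt; apply/negP => lt.
have Hp' := repl_profile i Hp Hq.
have gt : F (repl p i q) a < Pc (repl p i q i) a.
  by rewrite /repl eqxx; apply: lt_trans h2.
have := (LSP i (repl p i q) (p i) a Hp' (Hp i) La).2 gt; rewrite repl_id leNgt lt //.
Qed.

Lemma const_step_lt p i q a : profile_on Lam p -> prob_on Lam q -> Lam a ->
  Pc (p i) a < F p a -> Pc q a < F p a -> F (repl p i q) a = F p a.
Proof.
move=> Hp Hq La h1 h2.
have le1 := (LSP i p q a Hp Hq La).1 h1.
apply/eqP; rewrite eq_le le1 andbT; rewrite leNgt; apply/negP => lt.
have Hp' := repl_profile i Hp Hq.
have gt : Pc (repl p i q i) a < F (repl p i q) a.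
  by rewrite /repl eqxx; apply: lt_trans lt.
have := (LSP i (repl p i q) (p i) a Hp' (Hp i) La).1 gt; rewrite repl_id leNgt lt //.
Qed.

Definition mix (p q : 'I_n -> probability R R) (U : {set 'I_n}) :=
  fun j => if j \in U then q j else p j.

Lemma chain (P : ('I_n -> probability R R) -> Prop) p q (U : {set 'I_n}) :
  profile_on Lam p -> (forall i, prob_on Lam (q i)) -> P p ->
  (forall r i, profile_on Lam r -> P r -> i \in U -> r i = p i -> P (repl r i (q i))) ->
  P (mix p q U).
Proof.
move=> Hp Hq P0 Hstep.
pose mixs (s : seq 'I_n) := fun j => if j \in s then q j else p j.
have prof s : profile_on Lam (mixs s) by move=> j; rewrite /mixs; case: ifP.
suff H : forall s, uniq s -> {subset s <= U} -> P (mixs s).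
  have -> : mix p q U = mixs (enum U).
    by apply: funext => j; rewrite /mix /mixs mem_enum.
  by apply: H; [exact: enum_uniq|move=> x; rewrite mem_enum].
elim => [|x s IH] /=.
  by move=> _ _; have -> : mixs [::] = p by apply: funext.
move=> /andP[xs us] sub.
have -> : mixs (x :: s) = repl (mixs s) x (q x).
  apply: funext => j; rewrite /mixs /repl in_cons.
  by case: eqVneq => [->|].
apply: Hstep => //.
- by apply: IH => // y ys; apply: sub; rewrite in_cons ys orbT.
- by apply: sub; rewrite in_cons eqxx.
- by rewrite /mixs (negbTE xs).
Qed.

Lemma mono_chain p q a : profile_on Lam p -> profile_on Lam q -> Lam a ->
  (forall i, Pc (p i) a <= Pc (q i) a) -> F p a <= F q a.
Proof.
move=> Hp Hq La H.
have -> : q = mix p q finset.setT by apply: funext => j; rewrite /mix finset.in_setT.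
apply: (chain (fun r => F p a <= F r a)) => //.
move=> r i Hr Fr _ ri; apply: le_trans Fr _; apply: mono_step => //.
by rewrite ri.
Qed.

Lemma cdf_eq_chain p q a : profile_on Lam p -> profile_on Lam q -> Lam a ->
  (forall i, Pc (p i) a = Pc (q i) a) -> F p a = F q a.
Proof.
move=> Hp Hq La H; apply/eqP; rewrite eq_le !mono_chain // => i; rewrite H //.
Qed.

Lemma const_chain_gt p q (U : {set 'I_n}) a : profile_on Lam p ->
  (forall i, prob_on Lam (q i)) -> Lam a ->
  (forall i, i \in U -> F p a < Pc (p i) a /\ F p a < Pc (q i) a) ->
  F (mix p q U) a = F p a.
Proof.
move=> Hp Hq La H.
apply: (chain (fun r => F r a = F p a)) => //.
move=> r i Hr Fr iU ri; rewrite const_step_gt //; rewrite Fr.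
- by rewrite ri; case: (H i iU).
- by case: (H i iU).
Qed.

Lemma const_chain_lt p q (U : {set 'I_n}) a : profile_on Lam p ->
  (forall i, prob_on Lam (q i)) -> Lam a ->
  (forall i, i \in U -> Pc (p i) a < F p a /\ Pc (q i) a < F p a) ->
  F (mix p q U) a = F p a.
Proof.
move=> Hp Hq La H.
apply: (chain (fun r => F r a = F p a)) => //.
move=> r i Hr Fr iU ri; rewrite const_step_lt //; rewrite Fr.
- by rewrite ri; case: (H i iU).
- by case: (H i iU).
Qed.

End level.

Lemma dom_cdf (R : realType) (Lam : set R) (mL : measurable Lam)
  (m1 m2 : {measure set R -> \bar R}) (G1 G2 : R -> R) :
  (m1 setT < +oo)%E -> (m2 setT < +oo)%E -> m1 (~` Lam) = 0%E ->
  (forall a, Lam a -> m1 (Lam `&` `]-oo, a]) = (G1 a)%:E) ->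
  (forall a, Lam a -> m2 (Lam `&` `]-oo, a]) = (G2 a)%:E) ->
  (forall a, Lam a -> G1 a <= G2 a) ->
  (forall a b, Lam a -> Lam b -> a <= b -> G1 b - G1 a <= G2 b - G2 a) ->
  forall A, measurable A -> (m1 A <= m2 A)%E.
Proof.
move=> f1 f2 c1 E1 E2 H1 H2.
apply: domR => //.
have mI (a : R) : measurable (Lam `&` `]-oo, a]) by exact: measurableI.
have fin (m : {measure set R -> \bar R}) A : measurable A -> (m setT < +oo)%E -> (m A < +oo)%E.
  by move=> mA mT; apply: le_lt_trans mT; apply: le_measure; rewrite ?inE.
have dif (m : {measure set R -> \bar R}) G a b : (m setT < +oo)%E ->
    (forall a, Lam a -> m (Lam `&` `]-oo, a]) = (G a)%:E) -> Lam a -> Lam b -> a <= b ->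
    m (Lam `&` `]a, b]) = (G b - G a)%:E.
  move=> mT E La Lb ab.
  have -> : Lam `&` `]a, b] = (Lam `&` `]-oo, b]) `\` (Lam `&` `]-oo, a]).
    apply/seteqP; split => z.
      move=> [Lz]; rewrite /= ?in_itv /= => /andP[az zb]; split; first by split => //; rewrite /= ?in_itv.
      by move=> [_]; rewrite /= ?in_itv /= leNgt az.
    move=> [[Lz]]; rewrite /= ?in_itv /= => zb H; split => //; rewrite /= ?in_itv /= zb andbT.
    by rewrite ltNge; apply/negP => za; apply: H; split.
  have HD : m ((Lam `&` `]-oo, b]) `\` (Lam `&` `]-oo, a])) =
      (m (Lam `&` `]-oo, b]) - m ((Lam `&` `]-oo, b]) `&` (Lam `&` `]-oo, a])))%E.
    by apply: measureD => //; exact: fin.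
  rewrite HD.
  have -> : (Lam `&` `]-oo, b]) `&` (Lam `&` `]-oo, a]) = Lam `&` `]-oo, a].
    apply: setIidr => z [Lz]; rewrite /= ?in_itv /= => za; split => //.
    by rewrite /= ?in_itv /= (le_trans za).
  by rewrite E // E // EFinB.
move=> x y; apply: (@domLam R Lam mL m1 m2 f1 f2 c1).
- by move=> a La; rewrite E1 // E2 // lee_fin H1.
- by move=> a b La Lb ab; rewrite (dif m1 G1) // (dif m2 G2) // lee_fin H2.
Qed.

Definition dprof (R : realType) (n : nat) (x y : R) (S : {set 'I_n}) : 'I_n -> probability R R :=
  fun i => if i \in S then (\d_x : probability R R) else (\d_y : probability R R).

Arguments dprof {R n}.

Lemma dirac_prob (R : realType) (Lam : set R) (x : R) : Lam x -> prob_on Lam (\d_x : probability R R).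
Proof. by move=> Lx; rewrite /prob_on -[LHS]/(\d_x Lam : \bar R) diracE mem_set. Qed.

Arguments dirac_prob {R Lam x}.

Lemma dprof_profile (R : realType) n (Lam : set R) x y (S : {set 'I_n}) :
  Lam x -> Lam y -> profile_on Lam (dprof x y S).
Proof. by move=> Lx Ly i; rewrite /dprof; case: ifP => _; [exact: (dirac_prob Lx)|exact: (dirac_prob Ly)]. Qed.

Lemma dprof_cdf (R : realType) n (Lam : set R) x y a (S : {set 'I_n}) i :
  Lam x -> Lam y -> x <= a -> a < y ->
  paf_cdf Lam (dprof x y S i) a = if i \in S then 1 else 0.
Proof.
move=> Lx Ly xa ay; rewrite /dprof; case: ifP => _; rewrite cdf_dirac // ?xa //.
by rewrite leNgt ay.
Qed.

Section median.
Context {R : realType} {n : nat} (Lam : set R) (mL : measurable Lam)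
  (psi : ('I_n -> probability R R) -> probability R R).
Hypothesis LSP : level_SP Lam psi.
Local Notation F p a := (paf_cdf Lam (psi p) a).
Local Notation Pc q a := (paf_cdf Lam q a).

Lemma median x y a p : Lam x -> Lam y -> Lam a -> x <= a -> a < y -> profile_on Lam p ->
  F p a = phi (fun S => F (dprof x y S) a) (fun i => Pc (p i) a).
Proof.
move=> Lx Ly La xa ay Hp.
set g := F p a; set t := fun i => Pc (p i) a.
have g01 := cdf01 (psi p) a mL; have t01 i := cdf01 (p i) a mL.
have Pdx : Pc (\d_x : probability R R) a = 1 by rewrite cdf_dirac ?xa.
have Pdy : Pc (\d_y : probability R R) a = 0 by rewrite cdf_dirac // leNgt ay.
have Hdx : prob_on Lam (\d_x : probability R R) by exact: (dirac_prob Lx).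
have Hdy : prob_on Lam (\d_y : probability R R) by exact: (dirac_prob Ly).
have Hd S := @dprof_profile R n Lam x y S Lx Ly.
have dcdf S i := @dprof_cdf R n Lam x y a S i Lx Ly xa ay.
apply/eqP; rewrite eq_le; apply/andP; split; last first.
  apply: bmax_le; first by case/andP: g01.
  move=> S /=.
  have [[i iS ti]|H] := pselect (exists2 i, i \in S & t i <= g).
    by rewrite ge_min; apply/orP; right; apply: le_trans (bmin_le _ _ _ iS) ti.
  have H' i : i \in S -> g < t i.
    by move=> iS; rewrite ltNge; apply/negP => tg; apply: H; exists i.
  set U := [set i | g < t i]%SET.
  have HF : F (mix p (fun _ => \d_x) U) a = g.
    apply: const_chain_gt => // i; rewrite inE => gti; split => //.
    by rewrite Pdx; apply: lt_le_trans gti _; case/andP: (t01 i).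
  rewrite ge_min; apply/orP; left; rewrite -HF.
  apply: mono_chain => //.
    by move=> i; rewrite /mix; case: ifP.
  move=> i; rewrite dcdf /mix; case: ifPn => iS.
    by rewrite inE (H' i iS) Pdx.
  by case: ifP => _; [rewrite Pdx|]; case/andP: (t01 i).
set V := [set i | g <= t i]%SET.
apply: le_trans (le_bmax _ V); rewrite le_min; apply/andP; split; last first.
  by apply: bmin_ge; [case/andP: g01|move=> i; rewrite inE].
have HF : F (mix p (fun _ => \d_y) (~: V)) a = g.
  apply: const_chain_lt => // i; rewrite !inE -ltNge => tig; split => //.
  by rewrite Pdy; apply: le_lt_trans tig; case/andP: (t01 i).
rewrite -[X in X <= _]HF; apply: mono_chain => //.
  by move=> i; rewrite /mix; case: ifP.
move=> i; rewrite dcdf /mix !inE; have [iV|iV] := boolP (g <= t i); rewrite /=.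
  by case/andP: (t01 i).
by rewrite Pdy.
Qed.

End median.

Lemma conc (R : realType) (q : probability R R) (A B C : set R) :
  measurable A -> measurable B -> measurable C -> q A = 1%E ->
  B `&` A = C `&` A -> q B = q C.
Proof.
move=> mA mB mC qA BC.
have qC0 : q (~` A) = 0%E by rewrite probability_setC // qA subee.
have key D : measurable D -> q D = q (D `&` A).
  move=> mD.
  have h1 : (q (D `&` A) <= q D)%E.
    by apply: le_measure; rewrite ?inE //; try exact: measurableI; move=> z [].
  have h2 : (q D <= q (D `&` A))%E.
    apply: (@le_trans _ _ (q ((D `&` A) `|` ~` A))).
      apply: le_measure; rewrite ?inE //.
      - by apply: measurableU; [exact: measurableI|exact: measurableC].
      - by move=> z Dz; case: (pselect (A z)) => Az; [left|right].
    apply: (@le_trans _ _ (q (D `&` A) + q (~` A))%E).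
      by apply: measureU2; [exact: measurableI|exact: measurableC].
    by rewrite qC0 adde0.
  by apply/eqP; rewrite eq_le h1 h2.
by rewrite key // BC -key.
Qed.

Lemma cdf_max (R : realType) (Lam : set R) (q : probability R R) a :
  prob_on Lam q -> (forall y, Lam y -> y <= a) -> paf_cdf Lam q a = 1.
Proof.
move=> Hq H; rewrite /paf_cdf.
have -> : Lam `&` `]-oo, a] = Lam.
  by apply: setIidl => z Lz; rewrite /= in_itv /= H.
by rewrite Hq.
Qed.

Section cp.
Context {R : realType} {n : nat} (Lam : set R) (mL : measurable Lam)
  (psi : ('I_n -> probability R R) -> probability R R).
Hypothesis PAF : is_PAF Lam psi.
Hypothesis CP : certainty_preserving Lam psi.
Local Notation F p a := (paf_cdf Lam (psi p) a).
Local Notation Pc q a := (paf_cdf Lam q a).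

Lemma psi_conc x y a a' (S : {set 'I_n}) : Lam x -> Lam y ->
  x <= a -> a < y -> x <= a' -> a' < y ->
  F (dprof x y S) a = F (dprof x y S) a'.
Proof.
move=> Lx Ly xa ay xa' ay'.
set A := [set x] `|` [set y].
have mA : measurable A by apply: measurableU; exact: measurable_set1.
have AL : A `<=` Lam by move=> z [->|->].
have H1 : psi (dprof x y S) A = 1%E.
  apply: CP => //; first exact: dprof_profile.
  move=> i; rewrite /dprof; case: ifP => _.
    by rewrite -[LHS]/(\d_x A : \bar R) diracE mem_set //; left.
  by rewrite -[LHS]/(\d_y A : \bar R) diracE mem_set //; right.
rewrite /paf_cdf (@conc _ _ A _ (Lam `&` `]-oo, a']) mA) //; try exact: measurableI.
apply/seteqP; split => z [[Lz]]; rewrite /= ?in_itv /= => za /= [zx|zy]; rewrite ?zx ?zy in za *.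
- by split; [split=> //; rewrite /= in_itv /= |left].
- by move: (le_lt_trans za ay); rewrite ltxx.
- by split; [split=> //; rewrite /= in_itv /= |left].
- by move: (le_lt_trans za ay'); rewrite ltxx.
Qed.

Lemma beta0 x y a : Lam x -> Lam y -> a < y ->
  F (dprof x y (finset.set0 : {set 'I_n})) a = 0.
Proof.
move=> Lx Ly ay.
have mA : measurable [set y] by exact: measurable_set1.
have H1 : psi (dprof x y finset.set0) [set y] = 1%E.
  apply: CP => //; first exact: dprof_profile.
  - by move=> z ->.
  - move=> i; rewrite /dprof finset.in_set0.
    by rewrite -[LHS]/(\d_y [set y] : \bar R) diracE mem_set.
have E : (Lam `&` `]-oo, a]) `&` [set y] = set0 `&` [set y].
  apply/seteqP; split; last by move=> z [].
  move=> z [[Lz]]; rewrite /= ?in_itv /= => za zy; rewrite zy in za.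
  by move: (le_lt_trans za ay); rewrite ltxx.
rewrite /paf_cdf (@conc _ _ [set y] _ set0 mA (measurableI _ _ mL (measurable_itv _)) measurable0 H1 E).
by rewrite measure0.
Qed.

Lemma betaT x y a : Lam x -> Lam y -> x <= a ->
  F (dprof x y (finset.setT : {set 'I_n})) a = 1.
Proof.
move=> Lx Ly xa.
have mA : measurable [set x] by exact: measurable_set1.
have H1 : psi (dprof x y finset.setT) [set x] = 1%E.
  apply: CP => //; first exact: dprof_profile.
  - by move=> z ->.
  - move=> i; rewrite /dprof finset.in_setT.
    by rewrite -[LHS]/(\d_x [set x] : \bar R) diracE mem_set.
have E : (Lam `&` `]-oo, a]) `&` [set x] = setT `&` [set x].
  apply/seteqP; split => z [Hz zx] //; rewrite zx; split => //; split => //.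
rewrite /paf_cdf (@conc _ _ [set x] _ setT mA (measurableI _ _ mL (measurable_itv _)) measurableT H1 E).
by rewrite probability_setT.
Qed.

End cp.

Section main.
Context {R : realType} {n : nat} (Lam : set R) (mL : measurable Lam)
  (psi : ('I_n -> probability R R) -> probability R R).
Hypothesis n0 : (0 < n)%N.
Hypothesis PAF : is_PAF Lam psi.
Hypothesis LSP : level_SP Lam psi.
Local Notation F p a := (paf_cdf Lam (psi p) a).
Local Notation Pc q a := (paf_cdf Lam q a).

Lemma formula_max (beta : {set 'I_n} -> R) p a :
  beta finset.setT = 1 -> (forall S, beta S <= 1) -> profile_on Lam p ->
  (forall y, Lam y -> y <= a) -> F p a = phi beta (fun i => Pc (p i) a).
Proof.
move=> b1 bl Hp Hm.
rewrite cdf_max //; last exact: PAF.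
have -> : (fun i => Pc (p i) a) = (fun _ => 1) by apply: funext => i; rewrite cdf_max.
by rewrite phi_one.
Qed.

Lemma CP_to_beta : certainty_preserving Lam psi ->
  exists beta : {set 'I_n} -> R,
    (forall S, 0 <= beta S <= 1) /\
    (forall S S2 : {set 'I_n}, S \subset S2 -> beta S <= beta S2) /\
    beta finset.set0 = 0 /\ beta finset.setT = 1 /\
    (forall p, profile_on Lam p -> forall a, Lam a ->
       F p a = phi beta (fun i => Pc (p i) a)).
Proof.
move=> CP.
have [[a0 [y0 [La0 [Ly0 ay0]]]]|Hno] :=
  pselect (exists a0 y0, Lam a0 /\ Lam y0 /\ a0 < y0).
  exists (fun S => F (dprof a0 y0 S) a0).
  have Hd S := @dprof_profile R n Lam a0 y0 S La0 Ly0.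
  have b1 : F (dprof a0 y0 finset.setT) a0 = 1 by apply: betaT.
  have bl S : F (dprof a0 y0 S) a0 <= 1 by case/andP: (cdf01 (psi (dprof a0 y0 S)) a0 mL).
  split; first by move=> S; exact: cdf01.
  split.
    move=> S S2 sub; apply: mono_chain => // i.
    rewrite !(@dprof_cdf R n Lam a0 y0 a0) //; case: ifPn => iS.
      by rewrite (fintype.subsetP sub _ iS).
    by case: ifP.
  split; first by apply: beta0.
  split => // p Hp a La.
  have [[y [Ly ay]]|Hmax] := pselect (exists y, Lam y /\ a < y); last first.
    apply: formula_max => // y Ly; rewrite leNgt; apply/negP => ay.
    by apply: Hmax; exists y.
  set lo := Num.min a a0; set y' := Num.max y y0.
  have Llo : Lam lo by rewrite /lo /Num.min; case: ifP.
  have Ly' : Lam y' by rewrite /y' /Num.max; case: ifP.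
  have loa : lo <= a by rewrite /lo ge_min lexx.
  have loa0 : lo <= a0 by rewrite /lo ge_min lexx orbT.
  have ay' : a < y' by rewrite /y' lt_max ay.
  have a0y' : a0 < y' by rewrite /y' lt_max ay0 orbT.
  rewrite (@median R n Lam mL psi LSP _ _ _ _ Llo Ly' La loa ay' Hp).
  congr phi; apply: funext => S.
  rewrite (@psi_conc R n Lam mL psi CP _ _ a a0 S Llo Ly' loa ay' loa0 a0y').
  apply: cdf_eq_chain => //; try exact: dprof_profile.
  by move=> i; rewrite !(@dprof_cdf R n Lam _ _ a0).
exists (fun S => if S == finset.setT then 1 else 0).
have Hm a : Lam a -> forall y, Lam y -> y <= a.
  move=> La y Ly; rewrite leNgt; apply/negP => ay.
  by apply: Hno; exists a, y.
split; first by move=> S; case: ifP => _; rewrite ?lexx ?ler01.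
split.
  move=> S S2 sub; case: (S =P finset.setT) => [ST|_]; last by case: ifP => _; rewrite ?ler01.
  have -> : S2 = finset.setT.
    by apply/eqP; rewrite finset.eqEsubset finset.subsetT -ST.
  by rewrite !eqxx.
split.
  case: ifP => // /eqP E.
  have := finset.in_setT (Ordinal n0); rewrite -E finset.in_set0 //.
split; first by rewrite eqxx.
move=> p Hp a La; apply: formula_max => //; first by rewrite eqxx.
  by move=> S; case: ifP => _; rewrite ?lexx ?ler01.
exact: Hm.
Qed.

End main.

Lemma cdf_mono (R : realType) (Lam : set R) (q : probability R R) a b :
  measurable Lam -> a <= b -> paf_cdf Lam q a <= paf_cdf Lam q b.
Proof.
move=> mL ab; rewrite /paf_cdf fine_le ?fin_num_measure //; try exact: measurableI.
apply: le_measure; rewrite ?inE //; try exact: measurableI.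
by move=> z [Lz]; rewrite /= ?in_itv /= => za; split => //; rewrite /= ?in_itv /= (le_trans za).
Qed.

Lemma cdfE (R : realType) (Lam : set R) (mL : measurable Lam) (q : probability R R) a :
  q (Lam `&` `]-oo, a]) = (paf_cdf Lam q a)%:E.
Proof. by rewrite /paf_cdf fineK // fin_num_measure //; exact: measurableI. Qed.

Section rep.
Context {R : realType} {n : nat} (Lam : set R) (mL : measurable Lam)
  (psi : ('I_n -> probability R R) -> probability R R).
Hypothesis PAF : is_PAF Lam psi.
Local Notation F p a := (paf_cdf Lam (psi p) a).
Local Notation Pc q a := (paf_cdf Lam q a).

Lemma CP_from_rep (beta : {set 'I_n} -> R) : beta finset.set0 = 0 ->
  (forall p, profile_on Lam p -> forall a, Lam a -> F p a = phi beta (fun i => Pc (p i) a)) ->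
  certainty_preserving Lam psi.
Proof.
move=> b0 rep p Hp A mA AL HA.
pose ms : nat -> {measure set R -> \bar R} :=
  fun k => if (insub k : option 'I_n) is Some i then (p i : {measure set R -> \bar R}) else mzero.
pose m2 := msum ms n.
have m2E X : measurable X -> m2 X = (\sum_i fine (p i X))%:E.
  move=> mX; rewrite /m2 /msum -sumEFin; apply: eq_bigr => k _.
  by rewrite /ms valK /= fineK // fin_num_measure.
have m1fin : ((psi p) setT < +oo)%E.
  by rewrite probability_setT ltry.
have m2fin : (m2 setT < +oo)%E by rewrite m2E // ltry.
have c1 : (psi p) (~` Lam) = 0%E.
  by rewrite probability_setC // PAF // subee.
have t01 i a : 0 <= Pc (p i) a <= 1 by exact: cdf01.
have key := @dom_cdf R Lam mL (psi p) m2 (fun a => F p a) (fun a => \sum_i Pc (p i) a)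
  m1fin m2fin c1.
have le : ((psi p) (~` A) <= m2 (~` A))%E.
  apply: key; last exact: measurableC.
  - by move=> a La; exact: cdfE.
  - by move=> a La; apply: m2E; exact: measurableI.
  - move=> a La; rewrite rep //; apply: phi_le_sum => // i.
    by case/andP: (t01 i a).
  - move=> a b La Lb ab; rewrite !rep //; apply: phi_lip => i.
    exact: cdf_mono.
have pC i : p i (~` A) = 0%E by rewrite probability_setC // HA subee.
move: le; rewrite m2E; last exact: measurableC.
rewrite big1 => [|i _]; last by rewrite pC.
move=> le0.
have psiC : (psi p) (~` A) = 0%E.
  by apply/eqP; rewrite eq_le le0 measure_ge0.
have := probability_setC (psi p) (measurableC mA).
by rewrite setCK psiC sube0.
Qed.

Lemma unan_from_rep (beta : {set 'I_n} -> R) : beta finset.set0 = 0 -> beta finset.setT = 1 ->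
  (forall p, profile_on Lam p -> forall a, Lam a -> F p a = phi beta (fun i => Pc (p i) a)) ->
  unanimous Lam psi.
Proof.
move=> b0 b1 rep q Hq A mA.
have Hp : profile_on Lam (fun _ : 'I_n => q) by move=> i.
have E a : Lam a -> F (fun _ => q) a = Pc q a.
  by move=> La; rewrite rep // phi_diag //; exact: cdf01.
have f1 : ((psi (fun _ => q)) setT < +oo)%E.
  by rewrite probability_setT ltry.
have f2 : (q setT < +oo)%E.
  by rewrite probability_setT ltry.
have c1 : (psi (fun _ => q)) (~` Lam) = 0%E.
  by rewrite probability_setC // PAF // subee.
have c2 : q (~` Lam) = 0%E.
  by rewrite probability_setC // Hq subee.
apply/eqP; rewrite eq_le; apply/andP; split.
  apply: (@dom_cdf R Lam mL _ _ (fun a => Pc q a) (fun a => Pc q a)) => //.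
  - by move=> a La; rewrite -E //; exact: cdfE.
  - by move=> a La; exact: cdfE.
apply: (@dom_cdf R Lam mL _ _ (fun a => Pc q a) (fun a => Pc q a)) => //.
- by move=> a La; exact: cdfE.
- by move=> a La; rewrite -E //; exact: cdfE.
Qed.

End rep.

Theorem mainTheorem4 (R : realType) (n : nat) (Lam : set R)
  (psi : ('I_n -> probability R R) -> probability R R) :
  (0 < n)%N -> measurable Lam -> Lam !=set0 ->
  is_PAF Lam psi -> level_SP Lam psi ->
  (certainty_preserving Lam psi <->
     unanimous Lam psi /\
     exists f : {set 'I_n} -> R -> R,
       maxmin_representation Lam psi f /\ (forall S, constant_on Lam (f S))) /\
  (certainty_preserving Lam psi <->
     exists beta : {set 'I_n} -> R,
       (forall S, 0 <= beta S <= 1) /\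
       (forall S S2 : {set 'I_n}, S \subset S2 -> beta S <= beta S2) /\
       beta (finset.set0 : {set 'I_n}) = 0 /\ beta (finset.setT : {set 'I_n}) = 1 /\
       (forall p, profile_on Lam p -> forall a, Lam a ->
          paf_cdf Lam (psi p) a =
          \big[Num.max/0]_(S : {set 'I_n})
             Num.min (beta S) (\big[Num.min/1]_(i in S) paf_cdf Lam (p i) a))).
Proof.
move=> n0 mL L0 PAF LSP.
split; last first.
  split.
    move=> CP; have [beta [b01 [bmono [b0 [b1 brep]]]]] := @CP_to_beta R n Lam mL psi n0 PAF LSP CP.
    by exists beta.
  move=> [beta [_ [_ [b0 [_ brep]]]]].
  exact: (@CP_from_rep R n Lam mL psi PAF _ b0 brep).
split.
  move=> CP; have [beta [b01 [bmono [b0 [b1 brep]]]]] := @CP_to_beta R n Lam mL psi n0 PAF LSP CP.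
  split; first exact: (@unan_from_rep R n Lam mL psi PAF _ b0 b1 brep).
  exists (fun S _ => beta S); split; last by move=> S a b _ _.
  split.
    move=> S; split; first by move=> a _; exact: b01.
    split; first by move=> a b _ _ _; rewrite lexx.
    by move=> a _ e e0; exists 1 => // b _ _ _; rewrite subrr normr0.
  split; first by move=> S S2 a _ sub; exact: bmono.
  by move=> p Hp a La; exact: brep.
move=> [U [f [[fph [fmono frep]] fconst]]].
have [[x [y [Lx [Ly xy]]]]|Hno] := pselect (exists x y, Lam x /\ Lam y /\ x < y).
  pose beta S := f S x.
  have rep : forall p, profile_on Lam p -> forall a, Lam a ->
      paf_cdf Lam (psi p) a = phi beta (fun i => paf_cdf Lam (p i) a).
    move=> p Hp a La; rewrite frep //; apply: eq_bigr => S _.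
    by rewrite /beta (fconst S a x La Lx).
  apply: (@CP_from_rep R n Lam mL psi PAF beta) => //.
  have Hd : profile_on Lam (fun _ : 'I_n => (\d_y : probability R R)).
    by move=> i; exact: (dirac_prob Ly).
  have h := rep _ Hd x Lx.
  have lhs : paf_cdf Lam (psi (fun _ => \d_y)) x = 0.
    have mX : measurable (Lam `&` `]-oo, x]) by exact: measurableI.
    rewrite /paf_cdf (U _ (dirac_prob Ly) _ mX).
    rewrite -[X in fine X]/(\d_y (Lam `&` `]-oo, x]) : \bar R) diracE memNset //=.
    by move=> -[_]; rewrite /= in_itv /= leNgt xy.
  have := phi_set0_le beta (fun i => paf_cdf Lam ((fun _ => \d_y) i) x).
  rewrite -h lhs.
  have /andP[f0 f1] := (fph finset.set0).1 x Lx.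
  rewrite /beta (min_idPl f1) => fle.
  by apply/eqP; rewrite eq_le fle f0.
move=> p Hp A mA AL HA.
have [z Az] : A !=set0.
  apply/set0P/negP => /eqP A0; have := HA (Ordinal n0); rewrite A0 measure0.
  by move=> /esym /eqP; rewrite onee_eq0.
have -> : A = Lam.
  apply/seteqP; split => // w Lw.
  have Lz := AL z Az.
  have [wz|zw|wz] := ltgtP w z.
  - by exfalso; apply: Hno; exists w, z.
  - by exfalso; apply: Hno; exists z, w.
  - by rewrite wz.
exact: PAF.
Qed.
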